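(* Let $m,n\ge 1$ and $t\ge 0$ be integers and define $K_0,\dots,K_n$ as in the context. If $K_i\le 2^{n-i}$ for all $1\le i\le n$, then $m\sum_{\ell=0}^{t}\binom{n}{\ell}\le 2^n$. Hence the smallest $n$ satisfying the condition of Theorem 2 is at least the smallest $n$ satisfying the sphere-packing (Hamming) bound $m\le 2^n/\sum_{\ell=0}^t\binom{n}{\ell}$.
   Context: Binomial coefficients with negative lower index are $0$. For $1\le i\le n$ put $A_{n-i}=\gcd\{\binom{n-i}{j}: t-i+1\le j\le t\}$ (equivalently the gcd of $\binom{n-i}{j}$ over $\max(0,t-i+1)\le j\le t$). Put $K_0=m\sum_{\ell=0}^{t}\binom{n}{\ell}$, and for $i=1,\dots,n$ define recursively $K_i$ to be the least integer such that $K_i\ge K_{i-1}/2$ and $K_i\equiv m\sum_{\ell=0}^{t}\binom{n-i}{\ell}\pmod{A_{n-i}}$. *)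

(* Defs.v *)
From HB Require Import structures.
From mathcomp Require Import all_boot all_order all_algebra.
Set Implicit Arguments. Unset Strict Implicit. Unset Printing Implicit Defensive.

Definition ball (n t : nat) : nat := \sum_(0 <= l < t.+1) 'C(n, l).

(* A_{n-i} = gcd { 'C(n-i, j) : max(0, t-i+1) <= j <= t }.
   In nat, t.+1 - i is the truncated value max(0, t-i+1). gcd of an empty
   family would be 0, but the range is nonempty for i >= 1. *)
Definition Aidx (n t i : nat) : nat :=
  \big[gcdn/0%N]_(t.+1 - i <= j < t.+1) 'C(n - i, j).

(* Main.v *)
Require Import Defs.
From HB Require Import structures.
From mathcomp Require Import all_boot all_order all_algebra.
Import Order.TTheory GRing.Theory Num.Theory.

Theorem theorem3 (m n t : nat) (K : nat -> int) :
  (1 <= m)%N -> (1 <= n)%N ->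
  K 0%N = (Posz (m * ball n t)) ->
  (forall i : nat, (1 <= i <= n)%N ->
     [/\ (K i.-1 <= 2 * K i)%R,
         (K i == (Posz (m * ball (n - i) t)) %[mod (Posz (Aidx n t i))])%Z
       & forall k : int, (K i.-1 <= 2 * k)%R ->
           (k == (Posz (m * ball (n - i) t)) %[mod (Posz (Aidx n t i))])%Z ->
           (K i <= k)%R]) ->
  (forall i : nat, (1 <= i <= n)%N -> (K i <= (Posz (2 ^ (n - i))))%R) ->
  (m * ball n t <= 2 ^ n)%N.
Proof.
move=> _ n1 K0 H Hb.
have step: forall i, (i <= n)%N -> (K 0%N <= 2 ^+ i * K i)%R.
  elim=> [|i IH] Hi; first by rewrite expr0 mul1r.
  have [H1 _ _] := H i.+1 Hi.
  apply: le_trans (IH (ltnW Hi)) _.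
  rewrite exprSr -mulrA; apply: ler_wpM2l => //.
  by apply: exprn_ge0.
have nn : (0 < n <= n)%N by rewrite n1 leqnn.
have Kn := Hb n nn; rewrite subnn expn0 in Kn.
have S := step n (leqnn n); rewrite K0 in S.
have: (Posz (m * ball n t) <= 2 ^+ n)%R.
  apply: le_trans S _; rewrite -[X in (_ <= X)%R]mulr1; apply: ler_wpM2l => //.
  by apply: exprn_ge0.
by rewrite -natrX -lez_nat natz.
Qed.
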